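(* In the setting below, let $(m_j)_{j\in\mathbb{N}}$ be a strictly increasing sequence of natural numbers and $(\rho_j)_{j\in\mathbb{N}}$ a sequence of strictly positive reals. Suppose (1) there exists $K\ge 0$ such that $\mathbb{P}_X(S_{\rho_j})\le K\,\mathbb{P}_X(B_{\rho_j})$ for all $j$, and (2) $m_j\,\mathbb{P}_X(\bar B_{\rho_j})\to\infty$ as $j\to\infty$. Then $$\mathbb{E}\big[\mathbb{I}_{S_{\rho_j}}(X^x_{m_j})|\eta(X^x_{m_j})-\eta(x)|\big]\to 0\quad\text{as } j\to\infty.$$
   Context: Let $(\mathcal{X},d)$ be a metric space with its Borel $\sigma$-algebra, let $(\Omega,\mathcal{F},\mathbb{P})$ be a probability space, and let $X,X_1,X_2,\dots$ be i.i.d. $\mathcal{X}$-valued random variables with common law $\mathbb{P}_X$. For $x\in\mathcal{X}$ and $r>0$ write $B_r=\{x':d(x,x')<r\}$, $\bar B_r=\{x':d(x,x')\le r\}$ and $S_r=\{x':d(x,x')=r\}$. The support of $\mathbb{P}_X$ is the set of $x$ such that $\mathbb{P}_X(\bar B_r(x))>0$ for all $r>0$. Fix $x$ in the support of $\mathbb{P}_X$ and a bounded measurable $\eta:\mathcal{X}\to\mathbb{R}$. For each $m\in\mathbb{N}$, a nearest neighbor of $x$ among $X_1,\dots,X_m$ is a measurable $X^x_m:\Omega\to\mathcal{X}$ with $X^x_m(\omega)\in\arg\min_{x'\in\{X_1(\omega),\dots,X_m(\omega)\}}d(x,x')$ for every $\omega\in\Omega$; fix such a sequence $(X^x_m)_{m\in\mathbb{N}}$.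 *)

(* Defs.v *)
From HB Require Import structures.
From mathcomp Require Import all_boot all_order all_algebra.
From mathcomp Require Import all_classical all_reals all_analysis.
Set Implicit Arguments. Unset Strict Implicit. Unset Printing Implicit Defensive.
Import Order.TTheory GRing.Theory Num.Theory.
Local Open Scope classical_set_scope.
Local Open Scope ring_scope.

Section Defs.
Context {R : realType} {T : Type}.

Definition is_metric (dist : T -> T -> R) : Prop :=
  [/\ (forall x y, dist x y = 0 <-> x = y),
      (forall x y, dist x y = dist y x) &
      (forall x y z, dist x z <= dist x y + dist y z)].

Definition metric_open (dist : T -> T -> R) (U : set T) : Prop :=
  forall y, U y -> exists2 r : R, 0 < r & [set z | dist y z < r] `<=` U.

Definition oball (dist : T -> T -> R) (x : T) (r : R) : set T :=
  [set y | dist x y < r].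
Definition cball (dist : T -> T -> R) (x : T) (r : R) : set T :=
  [set y | dist x y <= r].
Definition sphere (dist : T -> T -> R) (x : T) (r : R) : set T :=
  [set y | dist x y = r].
End Defs.

Definition law {R : realType} {dO dT} {Omega : measurableType dO}
  {T : measurableType dT} (P : probability Omega R) (Y : Omega -> T)
  : set T -> \bar R := fun A => P (Y @^-1` A).

Definition mutually_independent {R : realType} {dO dT} {Omega : measurableType dO}
  {T : measurableType dT} (P : probability Omega R) (Y : nat -> Omega -> T) : Prop :=
  forall (s : seq nat) (A : nat -> set T), uniq s ->
    (forall i, i \in s -> measurable (A i)) ->
    P (\big[setI/setT]_(i <- s) (Y i @^-1` A i)) =
    (\prod_(i <- s) P (Y i @^-1` A i))%E.

Definition identically_distributed {R : realType} {dO dT} {Omega : measurableType dO}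
  {T : measurableType dT} (P : probability Omega R) (Y : nat -> Omega -> T) : Prop :=
  forall i (A : set T), measurable A -> law P (Y i) A = law P (Y 0%N) A.

(* Main.v *)
Require Import Defs.
From HB Require Import structures.
From mathcomp Require Import all_boot all_order all_algebra.
From mathcomp Require Import all_classical all_reals all_analysis.
From mathcomp Require Import ring lra.
Import Order.TTheory GRing.Theory Num.Theory.
Import measurable_realfun.
Local Open Scope classical_set_scope.
Local Open Scope ring_scope.

Lemma bern_aux (R : realType) (q : R) (n : nat) : 0 <= q -> q <= 1 ->
  (1 - q) ^+ n * (1 + n%:R * q) <= 1.
Proof.
move=> q0 q1; elim: n => [|n IH]; first by rewrite expr0 mul0r addr0 mulr1.
have a0 : 0 <= (1 - q) ^+ n by apply: exprn_ge0; lra.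
rewrite exprS -natr1 in IH *.
have h : (1 - q) * (1 + (n%:R + 1) * q) <= 1 + n%:R * q.
  have : 0 <= n%:R :> R by [].
  nra.
have h2 := ler_wpM2l a0 h.
set a := (1 - q) ^+ n in a0 IH h2 *.
set b := 1 + (n%:R + 1) * q in h h2 *.
have -> : (1 - q) * a * b = a * ((1 - q) * b) by ring.
exact: le_trans h2 IH.
Qed.

Lemma bigI_mem (O : Type) (F : nat -> set O) (s : seq nat) w :
  (forall k, k \in s -> F k w) -> (\big[setI/setT]_(i <- s) F i) w.
Proof.
elim: s => [|a s IH] H; first by rewrite big_nil.
rewrite big_cons; split; first by apply: H; rewrite inE eqxx.
by apply: IH => k ks; apply: H; rewrite inE ks orbT.
Qed.

Lemma ge_m (m : nat -> nat) : (forall j, (m j < m j.+1)%N) -> forall j, (j <= m j)%N.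
Proof. move=> h; elim=> [//|j IH]; exact: leq_ltn_trans IH (h j). Qed.

Theorem mainTheorem7 (R : realType) (dT : measure_display) (T : measurableType dT)
  (dist : T -> T -> R) (dO : measure_display) (Omega : measurableType dO)
  (P : probability Omega R) (Xs : nat -> Omega -> T)
  (x : T) (eta : T -> R) (Xnn : nat -> Omega -> T)
  (m : nat -> nat) (rho : nat -> R) :
  is_metric dist ->
  @measurable _ T = <<s metric_open dist >> ->
  (forall i, measurable_fun setT (Xs i)) ->
  mutually_independent P Xs ->
  identically_distributed P Xs ->
  (forall r : R, 0 < r -> (0 < law P (Xs 0%N) (cball dist x r))%E) ->
  measurable_fun setT eta ->
  (exists M : R, forall y, `|eta y| <= M) ->
  (forall n, measurable_fun setT (Xnn n)) ->
  (forall n w, (1 <= n)%N ->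
     (exists2 i, (1 <= i <= n)%N & Xnn n w = Xs i w) /\
     (forall k, (1 <= k <= n)%N -> dist x (Xnn n w) <= dist x (Xs k w))) ->
  (forall j, (m j < m j.+1)%N) ->
  (forall j, 0 < rho j) ->
  (exists2 K : R, 0 <= K & forall j,
     (law P (Xs 0%N) (sphere dist x (rho j))
        <= K%:E * law P (Xs 0%N) (oball dist x (rho j)))%E) ->
  (fun j => ((m j)%:R%:E * law P (Xs 0%N) (cball dist x (rho j)))%E)
     @ \oo --> +oo%E ->
  (fun j => (\int[P]_w
     ((\1_(sphere dist x (rho j)) (Xnn (m j) w) : R)
        * `|eta (Xnn (m j) w) - eta x|)%:E)%E)
     @ \oo --> 0%E.
Proof.
move=> [d0 dsym dtri] hmeas mXs hind hid _ meta [M hM] mXnn hnn mincr rho0 [K K0 hK] hcv.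
have mob r : measurable (oball dist x r).
  rewrite hmeas; apply: sub_sigma_algebra => y /= hy.
  exists (r - dist x y); first by rewrite subr_gt0.
  move=> z /= hz; rewrite /oball /=; have := dtri x y z; lra.
have mcb r : measurable (cball dist x r).
  rewrite -[cball _ _ _]setCK; apply: measurableC.
  rewrite hmeas; apply: sub_sigma_algebra => y /= hy.
  have hy' : r < dist x y by rewrite ltNge; apply/negP.
  exists (dist x y - r); first by rewrite subr_gt0.
  move=> z /= hz hzc; rewrite /cball /= in hzc.
  have := dtri x z y; rewrite (dsym z y); lra.
have spE r : sphere dist x r = cball dist x r `&` ~` oball dist x r.
  apply/seteqP; split => y; rewrite /sphere /cball /oball /=.
    by move=> ->; split; [exact: lexx | rewrite ltxx].
  move=> [h1 h2]; apply/eqP; rewrite eq_le h1 /= leNgt; exact/negP.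
have msp r : measurable (sphere dist x r).
  by rewrite spE; apply: measurableI => //; apply: measurableC.
have mpre i A : measurable A -> measurable (Xs i @^-1` A).
  by move=> mA; rewrite -(setTI (_ @^-1` _)); apply: mXs.
pose q j := fine (law P (Xs 0%N) (oball dist x (rho j))).
have Lq j : law P (Xs 0%N) (oball dist x (rho j)) = (q j)%:E.
  rewrite fineK // ge0_fin_numE ?measure_ge0 //.
  exact: le_lt_trans (probability_le1 P (mpre _ _ (mob _))) (ltey _).
have q0 j : 0 <= q j.
  by rewrite -lee_fin -Lq; apply: measure_ge0.
have q1 j : q j <= 1.
  by rewrite -lee_fin -Lq; apply: (probability_le1 P (mpre _ _ (mob _))).
have M0 : 0 <= M by apply: le_trans (hM x).
pose C := M + M.
have C0 : 0 <= C by rewrite /C; lra.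
have bound j : (1 <= m j)%N ->
  (\int[P]_w ((\1_(sphere dist x (rho j)) (Xnn (m j) w) : R)
        * `|eta (Xnn (m j) w) - eta x|)%:E <= (C * (1 - q j) ^+ m j)%:E)%E.
  move=> m1.
  set n := m j; set r := rho j.
  pose E := \big[setI/setT]_(i <- iota 1 n) (Xs i @^-1` ~` oball dist x r).
  have mE : measurable E.
    rewrite /E; elim: (iota 1 n) => [|a s IH]; rewrite ?big_nil ?big_cons //.
    by apply: measurableI => //; apply: mpre; apply: measurableC.
  have PE : P E = ((1 - q j) ^+ n)%:E.
    have := hind (iota 1 n) (fun=> ~` oball dist x r) (iota_uniq _ _)
      (fun _ _ => measurableC (mob r)).
    rewrite /= -/E => ->.
    under eq_bigr => i _.
      rewrite -preimage_setC probability_setC; last exact: mpre.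
      have := hid i _ (mob r); rewrite /law => ->.
      have := Lq j; rewrite /law -/r => ->; rewrite -EFinB.
    over.
    rewrite prodEFin; congr EFin.
    rewrite (_ : iota 1 n = index_iota 1 n.+1); last by rewrite /index_iota subn1.
    by rewrite prodr_const_nat subn1.
  apply: (@le_trans _ _ (\int[P]_w (C * \1_E w)%:E)%E).
    apply: ge0_le_integral => //.
    - apply/measurable_EFinP.
      apply: measurable_funM.
        exact: (measurableT_comp (measurable_indic (msp r)) (mXnn n)).
      have h1 : measurable_fun setT (fun w => eta (Xnn n w) - eta x).
        apply: measurable_funB; last exact: measurable_cst.
        exact: (measurableT_comp meta (mXnn n)).
      exact: (measurableT_comp (@normr_measurable R setT) h1).
    - apply/measurable_EFinP.
      apply: measurable_funM; first exact: measurable_cst.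
      exact: measurable_indic mE.
    - move=> w _; rewrite lee_fin.
      case: (pselect (sphere dist x r (Xnn n w))) => hs.
        rewrite indicE mem_set // mul1r.
        have Ew : E w.
          apply: bigI_mem => k; rewrite mem_iota => hk /=.
          rewrite add1n ltnS in hk.
          have := (hnn n w m1).2 k hk.
          rewrite /sphere /= in hs; rewrite hs /oball /= => h.
          by apply/negP; rewrite -leNgt.
        rewrite indicE mem_set // mulr1.
        apply: le_trans (ler_normB _ _) _; rewrite /C; exact: lerD.
      rewrite indicE memNset // mul0r.
      by apply: mulr_ge0 => //; rewrite indicE.
  under eq_integral do rewrite EFinM.
  rewrite ge0_integralZl_EFin //; last first.
    by apply/measurable_EFinP; exact: measurable_indic mE.
  rewrite integral_indic // setIT.
  apply: (@le_trans _ _ (C%:E * ((1 - q j) ^+ n)%:E)%E); last by rewrite -EFinM.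
  apply: lee_wpmul2l; first by rewrite lee_fin.
  rewrite le_eqVlt; apply/orP; left; apply/eqP; exact: PE.
have pos j : 0 < 1 + (m j)%:R * q j.
  have := q0 j; have : 0 <= (m j)%:R :> R by []. nra.
have K1 : 0 < 1 + K by lra.
have Hmq A : \forall j \near \oo, A <= (m j)%:R * q j.
  have /cvgeyPge /(_ ((1 + K) * A)) := hcv.
  apply: filterS => j hj.
  have cbU : cball dist x (rho j) = oball dist x (rho j) `|` sphere dist x (rho j).
    apply/seteqP; split => y; rewrite /cball /oball /sphere /=.
      by rewrite le_eqVlt => /orP[/eqP ->|->]; [right|left].
    by move=> [/ltW|->].
  have hU : (law P (Xs 0%N) (cball dist x (rho j)) <= law P (Xs 0%N) (oball dist x (rho j))
      + law P (Xs 0%N) (sphere dist x (rho j)))%E.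
    rewrite /law cbU preimage_setU.
    exact: measureU2 (mpre _ _ (mob _)) (mpre _ _ (msp _)).
  have hc : (law P (Xs 0%N) (cball dist x (rho j)) <= ((1 + K) * q j)%:E)%E.
    apply: le_trans hU _.
    apply: le_trans (leeD (lexx _) (hK j)) _.
    by rewrite Lq -EFinM -EFinD lee_fin mulrDl mul1r.
  have h2 := le_trans hj (@lee_wpmul2l _ (m j)%:R%:E (ltac:(by rewrite lee_fin)) _ _ hc).
  rewrite -EFinM lee_fin in h2.
  rewrite mulrCA in h2.
  have h3 : (1 + K) * A <= (1 + K) * ((m j)%:R * q j).
    exact: h2.
  by rewrite (ler_pM2l K1) in h3.
have hm1 : \forall j \near \oo, (1 <= m j)%N.
  near=> j; apply: (@leq_trans j); last exact: ge_m mincr j.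
  by near: j; exact: nbhs_infty_ge.
apply: (squeeze_cvge (f := fun=> 0%E) (h := fun j => (C / (1 + (m j)%:R * q j))%:E)).
- near=> j; apply/andP; split.
    apply: integral_ge0 => w _; rewrite lee_fin; apply: mulr_ge0; by rewrite ?indicE.
  apply: le_trans (bound j _) _; first by near: j.
  rewrite lee_fin ler_pdivlMr //.
  have hb := @bern_aux R (q j) (m j) (q0 j) (q1 j).

  rewrite -mulrA; apply: (@le_trans _ _ (C * 1)); last by rewrite mulr1.
  exact: ler_wpM2l.
- exact: cvg_cst.
- apply: cvg_EFin; first by near=> j.
  apply/cvgrPdist_lt => e e0.
  have := Hmq (C / e); apply: filterS => j hj /=.
  rewrite sub0r normrN ger0_norm; last exact: divr_ge0 C0 (ltW (pos j)).
  rewrite ltr_pdivrMr //; rewrite ler_pdivrMr // in hj.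
  have := q0 j; nra.
Unshelve. all: end_near.
Qed.
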